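(* In generalized non-signalling theory (box world), consider a system of boxes each of which has at least two possible outputs. Suppose $\mathbf{R}$ and $\mathbf{S}$ are vectors both representing the same effect $\mu$, where $\mathbf{R}$ has exactly one non-zero entry and $\mathbf{S}$ has no negative entries. Then $\mathbf{R}=\mathbf{S}$.
   Context: Box world (GNST): a box has a finite set of inputs and outputs. A system of boxes has as states all collections $p(\mathbf{a}|\mathbf{x})\ge0$ (output tuple $\mathbf{a}$, input tuple $\mathbf{x}$) that are normalized ($\sum_{\mathbf{a}}p(\mathbf{a}|\mathbf{x})=1$ for all $\mathbf{x}$) and no-signalling (for each box $i$, $\sum_{a_i}p(\mathbf{a}|\mathbf{x})$ is independent of $x_i$). An effect is any linear map $\mu$ from the set of states to $[0,1]$; a real vector $\mathbf{R}$ indexed by pairs $(\mathbf{a},\mathbf{x})$ represents $\mu$ if $\mu(\mathbf{p})=\sum_{\mathbf{a},\mathbf{x}}p(\mathbf{a}|\mathbf{x})R(\mathbf{a}|\mathbf{x})$ for every state $\mathbf{p}$. *)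

(* Defs.v *)
From HB Require Import structures.
From mathcomp Require Import all_boot all_order all_algebra.
From mathcomp Require Import reals.
Set Implicit Arguments. Unset Strict Implicit. Unset Printing Implicit Defensive.
Import Order.TTheory GRing.Theory Num.Theory.
Local Open Scope ring_scope.

Definition Outs (n : nat) (k : 'I_n -> nat) := {dffun forall i : 'I_n, 'I_(k i)}.
Definition Ins (n : nat) (m : 'I_n -> nat) := {dffun forall i : 'I_n, 'I_(m i)}.

Section Box.
Context (R : realType) (n : nat) (m k : 'I_n -> nat).

(* vectors indexed by pairs (output tuple a, input tuple x): p(a|x) *)
Definition boxvec := Outs k -> Ins m -> R.

Definition is_state (p : boxvec) : Prop :=
  [/\ (forall a x, 0 <= p a x),
      (forall x, \sum_(a : Outs k) p a x = 1) &
      (* no-signalling: marginal obtained by summing out a_i is independent of x_i *)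
      (forall (i : 'I_n) (a : Outs k) (x x' : Ins m),
          (forall j, j != i -> x j = x' j) ->
          \sum_(b : Outs k | [forall j, (j != i) ==> (b j == a j)]) p b x =
          \sum_(b : Outs k | [forall j, (j != i) ==> (b j == a j)]) p b x')].

Definition is_effect (mu : boxvec -> R) : Prop :=
  (forall p, is_state p -> 0 <= mu p <= 1) /\
  (forall p q (t : R), is_state p -> is_state q -> 0 <= t <= 1 ->
     mu (fun a x => t * p a x + (1 - t) * q a x) = t * mu p + (1 - t) * mu q).

Definition represents (Rv : boxvec) (mu : boxvec -> R) : Prop :=
  forall p, is_state p -> mu p = \sum_(a : Outs k) \sum_(x : Ins m) p a x * Rv a x.

End Box.

(* Main.v *)
Require Import Defs.
From HB Require Import structures.
From mathcomp Require Import all_boot all_order all_algebra.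
From mathcomp Require Import reals.
Import Order.TTheory GRing.Theory Num.Theory.
Local Open Scope ring_scope.

Section Helpers.
Context (R : realType) (n : nat) (m k : 'I_n -> nat).

Definition detout (f : forall i, 'I_(m i) -> 'I_(k i)) (y : Ins m) : Outs k :=
  [ffun i => f i (y i)].

Definition detp (f : forall i, 'I_(m i) -> 'I_(k i)) : boxvec R m k :=
  fun b y => (b == detout f y)%:R.

Lemma sum_ind (P : pred (Outs k)) (c : Outs k) :
  \sum_(b | P b) ((b == c)%:R : R) = (P c)%:R.
Proof.
case Pc: (P c).
  rewrite (bigD1 c) //= eqxx big1 ?addr0 // => b /andP[_ /negbTE ->] //.
rewrite big1 // => b Pb; case: eqP => // E; by rewrite E Pc in Pb.
Qed.

Lemma detp_state f : is_state (detp f).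
Proof.
split.
- by move=> a x; rewrite /detp ler0n.
- by move=> x; rewrite /detp (sum_ind xpredT).
- move=> i a x x' H; rewrite /detp !sum_ind; congr (_ %:R); congr (nat_of_bool _).
  apply/forallP/forallP => h j; move: (h j); case: (eqVneq j i) => //= ji;
  by rewrite /detout !ffunE H.
Qed.

Lemma sum_single (V p : boxvec R m k) a0 x0 :
  (forall a x, (a, x) != (a0, x0) -> V a x = 0) ->
  \sum_(a : Outs k) \sum_(x : Ins m) p a x * V a x = p a0 x0 * V a0 x0.
Proof.
move=> H; rewrite (bigD1 a0) //=.
have -> : \sum_(a | a != a0) \sum_(x : Ins m) p a x * V a x = 0.
  apply: big1 => a ha; apply: big1 => x _.
  by rewrite H ?mulr0 // xpair_eqE negb_and ha.
rewrite addr0 (bigD1 x0) //=.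
have -> : \sum_(x | x != x0) p a0 x * V a0 x = 0.
  by apply: big1 => x hx; rewrite H ?mulr0 // xpair_eqE eqxx.
by rewrite addr0.
Qed.

Lemma term_le (V p : boxvec R m k) a x :
  (forall a x, 0 <= p a x) -> (forall a x, 0 <= V a x) ->
  p a x * V a x <= \sum_(a : Outs k) \sum_(x : Ins m) p a x * V a x.
Proof.
move=> hp hV; rewrite (bigD1 a) //= (bigD1 x) //= -addrA lerDl.
apply: addr_ge0; apply: sumr_ge0 => ? _; last apply: sumr_ge0 => ? _;
  by apply: mulr_ge0.
Qed.

End Helpers.

Theorem lemma9 (R : realType) (n : nat) (m k : 'I_n -> nat)
    (hk : forall i, (2 <= k i)%N)
    (mu : boxvec R m k -> R) (Rv Sv : boxvec R m k)
    (hmu : is_effect mu)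
    (hR : represents Rv mu) (hS : represents Sv mu)
    (hRone : exists (a0 : Outs k) (x0 : Ins m),
        Rv a0 x0 != 0 /\ forall a x, (a, x) != (a0, x0) -> Rv a x = 0)
    (hSnn : forall a x, 0 <= Sv a x) :
  forall a x, Rv a x = Sv a x.
Proof.
have [a0 [x0 [_ hR0]]] := hRone.
have Szero : forall a x, (a, x) != (a0, x0) -> Sv a x = 0.
  move=> a x hax.
  pose alt i : 'I_(k i) :=
    if (a0 i == 0 :> nat) then Ordinal (hk i) else Ordinal (ltnW (hk i)).
  have altP i : alt i != a0 i.
    rewrite /alt; case: (eqVneq (a0 i : nat) 0%N) => h; apply/negP => /eqP E;
      by move: h; rewrite -E /= ?eqxx.
  pose f i (z : 'I_(m i)) := if z == x i then a i else alt i.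
  have st := @detp_state R n m k f.
  have e1 := hR _ st; rewrite (hS _ st) (@sum_single R n m k Rv _ a0 x0 hR0) in e1.
  have p0 : @detp R n m k f a0 x0 = 0.
    rewrite /detp; case: eqP => //= E; exfalso; move: hax.
    have hx : x0 = x.
      apply/ffunP => i; have := congr1 (fun g : Outs k => g i) E.
      rewrite /detout ffunE /f; case: eqP => // _ h.
      by move: (altP i); rewrite h eqxx.
    have ha : a = a0.
      apply/ffunP => i; have := congr1 (fun g : Outs k => g i) E.
      by rewrite /detout ffunE /f hx eqxx.
    by rewrite hx ha eqxx.
  rewrite p0 mul0r in e1.
  have := @term_le R n m k Sv (@detp R n m k f) a x (fun a x => ler0n _ _) hSnn.
  rewrite e1 /detp /detout.
  have -> : [ffun i => f i (x i)] = a by apply/ffunP => i; rewrite ffunE /f eqxx.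
  rewrite eqxx mul1r => h; by apply/eqP; rewrite eq_le h hSnn.
move=> a x.
case: (eqVneq (a, x) (a0, x0)) => [[-> ->]|hax]; last by rewrite hR0 // Szero.
pose f i (z : 'I_(m i)) := a0 i.
have st := @detp_state R n m k f.
have e1 := hR _ st; rewrite (hS _ st) (@sum_single R n m k Rv _ a0 x0 hR0) (@sum_single R n m k Sv _ a0 x0 Szero) in e1.
have d1 : @detp R n m k f a0 x0 = 1.
  rewrite /detp; have -> : @detout n m k f x0 = a0 by apply/ffunP => i; rewrite ffunE.
  by rewrite eqxx.
by rewrite d1 !mul1r in e1.
Qed.
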